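(* Let $m\ge3$, let $w_0^2(m)=\big(\sum_{l=1}^{m-1}\frac{m-l}{l^2}\big)^{-1}$, and for $k\ge0$ let $$w_{k+1}^2(m)=w_k^2(m)+\Big(\sum_{l=1}^{m-1}\frac{m-l}{l^2-w_k^2(m)}\Big)^{-1},$$ with $w_k(m)>0$. Then $w_0^2<w_1^2<\dots<w_k^2<1$ for all $k$, $\lim_{k\to\infty}w_k(m)=1$, and for each $k$, writing $w_k(m)=1-\varepsilon$ with $0<\varepsilon<1$, $$\frac{4\varepsilon}{7m-4}<w_{k+1}^2(m)-w_k^2(m)<\frac{1}{m-1}.$$ *)

(* Defs.v *)
From Stdlib Require Import Reals Lra Lia.
Open Scope R_scope.

Fixpoint sumS (m : nat) (x : R) (n : nat) : R :=
  match n with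
  | O => 0
  | S n' => sumS m x n' + (INR m - INR n) / (INR n ^ 2 - x)
  end.

Definition Ssum (m : nat) (x : R) : R := sumS m x (m - 1).

Fixpoint w2 (m : nat) (k : nat) : R :=
  match k with
  | O => / Ssum m 0
  | S k' => w2 m k' + / Ssum m (w2 m k')
  end.

Definition w (m k : nat) : R := sqrt (w2 m k).

(* Main.v *)
Require Import Defs.
From Stdlib Require Import Reals Lra Lia Psatz.
Open Scope R_scope.

Lemma term_nonneg m x l : x < 1 -> (1 <= l)%nat -> (l <= m)%nat ->
  0 <= (INR m - INR l) / (INR l ^ 2 - x).
Proof.
  intros Hx H1 H2.
  assert (1 <= INR l) by (replace 1 with (INR 1) by reflexivity; apply le_INR; lia).
  assert (INR l <= INR m) by (apply le_INR; lia).
  unfold Rdiv. apply Rmult_le_pos; [lra|]. left; apply Rinv_0_lt_compat. nra.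
Qed.

Lemma sum_lower m x n : x < 1 -> (1 <= n)%nat -> (n <= m)%nat ->
  (INR m - 1) / (1 - x) <= sumS m x n.
Proof.
  intros Hx. induction n as [|n IH]; intros H1 H2; [lia|].
  destruct n as [|n].
  - simpl. replace (1 * (1 * 1)) with 1 by ring. lra.
  - change (sumS m x (S (S n))) with (sumS m x (S n) + (INR m - INR (S (S n))) / (INR (S (S n)) ^ 2 - x)).
    pose proof (term_nonneg m x (S (S n)) Hx ltac:(lia) H2).
    specialize (IH ltac:(lia) ltac:(lia)). lra.
Qed.

Lemma sum_upper m x n : 0 <= x < 1 -> (1 <= n)%nat -> (n <= m)%nat ->
  sumS m x n <= (INR m - 1) / (1 - x) + INR m * (3/4 - / (2 * INR n) - / (2 * (INR n + 1))).
Proof.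
  intros Hx. induction n as [|n IH]; intros H1 H2; [lia|].
  destruct n as [|n].
  - simpl. replace (1 * (1 * 1)) with 1 by ring.
    replace (3 / 4 - / (2 * 1) - / (2 * (1 + 1))) with 0 by field. lra.
  - change (sumS m x (S (S n))) with (sumS m x (S n) + (INR m - INR (S (S n))) / (INR (S (S n)) ^ 2 - x)).
    specialize (IH ltac:(lia) ltac:(lia)).
    set (a := INR (S n)) in *.
    assert (Ha : 1 <= a) by (unfold a; replace 1 with (INR 1) by reflexivity; apply le_INR; lia).
    assert (E : INR (S (S n)) = a + 1) by (unfold a; rewrite (S_INR (S n)); reflexivity).
    rewrite E.
    assert (HM : a + 1 <= INR m) by (rewrite <- E; apply le_INR; lia).
    assert (T : (INR m - (a + 1)) / ((a + 1) ^ 2 - x) <= INR m / (a * (a + 2))).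
    { unfold Rdiv. apply Rmult_le_compat; try lra.
      - left; apply Rinv_0_lt_compat; nra.
      - apply Rinv_le_contravar; nra. }
    assert (Eq : INR m / (a * (a + 2)) + INR m * (3 / 4 - / (2 * a) - / (2 * (a + 1)))
              = INR m * (3 / 4 - / (2 * (a + 1)) - / (2 * (a + 1 + 1)))) by (field; lra).
    lra.
Qed.

Lemma Ssum_bounds m x : (3 <= m)%nat -> 0 <= x < 1 ->
  (INR m - 1) / (1 - x) <= Ssum m x <= (INR m - 1) / (1 - x) + 3 * INR m / 4.
Proof.
  intros Hm Hx. unfold Ssum. split.
  - apply sum_lower; lra || lia.
  - eapply Rle_trans. apply sum_upper; lra || lia.
    assert (1 <= INR (m-1)) by (replace 1 with (INR 1) by reflexivity; apply le_INR; lia).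
    assert (0 <= INR m) by apply pos_INR.
    assert (0 < / (2 * INR (m - 1))) by (apply Rinv_0_lt_compat; lra).
    assert (0 < / (2 * (INR (m - 1) + 1))) by (apply Rinv_0_lt_compat; lra).
    nra.
Qed.

Lemma INRm3 m : (3 <= m)%nat -> 3 <= INR m.
Proof. intros. replace 3 with (INR 3) by (simpl; lra). apply le_INR; lia. Qed.

Lemma step m x : (3 <= m)%nat -> 0 < x < 1 ->
  0 < / Ssum m x /\ / Ssum m x < 1 / (INR m - 1) /\ x + / Ssum m x < 1 /\
  4 * (1 - sqrt x) / (7 * INR m - 4) < / Ssum m x.
Proof.
  intros Hm Hx. pose proof (INRm3 m Hm) as HM.
  destruct (Ssum_bounds m x Hm ltac:(lra)) as [L U].
  set (s := Ssum m x) in *.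
  assert (P : 0 < (INR m - 1) / (1 - x)) by (apply Rdiv_lt_0_compat; lra).
  assert (Hs : 0 < s) by lra.
  assert (I1 : / s <= (1 - x) / (INR m - 1)).
  { replace ((1 - x) / (INR m - 1)) with (/ ((INR m - 1) / (1 - x))) by (field; lra).
    apply Rinv_le_contravar; lra. }
  assert (Q : (1 - x) / (INR m - 1) < 1 / (INR m - 1)).
  { unfold Rdiv. apply Rmult_lt_compat_r. apply Rinv_0_lt_compat; lra. lra. }
  assert (Q2 : (1 - x) / (INR m - 1) <= (1 - x) / 2).
  { unfold Rdiv. apply Rmult_le_compat_l. lra. apply Rinv_le_contravar; lra. }
  split; [apply Rinv_0_lt_compat; lra|].
  split; [lra|]. split; [lra|].
  set (w := sqrt x).
  assert (Hw : w * w = x) by (apply sqrt_sqrt; lra).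
  assert (Hw0 : 0 <= w) by apply sqrt_pos.
  assert (Hw1 : 0 < w < 1) by (split; nra).
  set (e := 1 - w).
  assert (He : 0 < e < 1) by (unfold e; lra).
  assert (A : (INR m - 1) / (1 - x) <= (INR m - 1) / e).
  { unfold Rdiv. apply Rmult_le_compat_l. lra. apply Rinv_le_contravar. lra. unfold e; nra. }
  assert (B : 3 * INR m / 4 < 3 * INR m / (4 * e)).
  { unfold Rdiv. apply Rmult_lt_compat_l. lra. apply Rinv_lt_contravar; nra. }
  assert (C : s < (7 * INR m - 4) / (4 * e)).
  { replace ((7 * INR m - 4) / (4 * e)) with ((INR m - 1) / e + 3 * INR m / (4 * e)) by (field; lra).
    lra. }
  replace (4 * e / (7 * INR m - 4)) with (/ ((7 * INR m - 4) / (4 * e))) by (field; lra).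
  apply Rinv_lt_contravar; [|lra].
  apply Rmult_lt_0_compat; auto. apply Rdiv_lt_0_compat; lra.
Qed.

Lemma w2_bounds m k : (3 <= m)%nat -> 0 < w2 m k < 1.
Proof.
  intros Hm. pose proof (INRm3 m Hm) as HM. induction k as [|k IH].
  - simpl. destruct (Ssum_bounds m 0 Hm ltac:(lra)) as [L U].
    replace ((INR m - 1) / (1 - 0)) with (INR m - 1) in L by field.
    split. apply Rinv_0_lt_compat; lra.
    replace 1 with (/ 1) by field. apply Rinv_lt_contravar; lra.
  - destruct (step m (w2 m k) Hm IH) as (A & B & C & D). simpl. lra.
Qed.

Theorem mainTheorem11 (m : nat) (hm : (3 <= m)%nat) :
  (forall k : nat, w2 m k < w2 m (S k)) /\
  (forall k : nat, w2 m k < 1) /\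
  Un_cv (fun k => w m k) 1 /\
  (forall k : nat,
     let eps := 1 - w m k in
     0 < eps < 1 /\
     4 * eps / (7 * INR m - 4) < w2 m (S k) - w2 m k /\
     w2 m (S k) - w2 m k < 1 / (INR m - 1)).
Proof.
  pose proof (INRm3 m hm) as HM.
  assert (St : forall k, w2 m (S k) = w2 m k + / Ssum m (w2 m k)) by reflexivity.
  assert (Wb : forall k, 0 < w m k < 1 /\ w m k * w m k = w2 m k).
  { intro k. pose proof (w2_bounds m k hm). unfold w.
    assert (Hw : sqrt (w2 m k) * sqrt (w2 m k) = w2 m k) by (apply sqrt_sqrt; lra).
    pose proof (sqrt_pos (w2 m k)). split; [split; nra|exact Hw]. }
  split; [|split; [|split]].
  - intro k. destruct (step m (w2 m k) hm (w2_bounds m k hm)) as (A & _). rewrite St; lra.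
  - intro k. apply (w2_bounds m k hm).
  - set (c := 2 / (7 * INR m - 4)).
    assert (Hc : 0 < c < 1).
    { unfold c; split. apply Rdiv_lt_0_compat; lra.
      apply (Rmult_lt_reg_r (7 * INR m - 4)). lra. field_simplify; lra. }
    assert (Dec : forall k, 1 - w2 m k <= (1 - c) ^ k).
    { induction k as [|k IH].
      - rewrite pow_O. pose proof (w2_bounds m 0 hm). lra.
      - destruct (step m (w2 m k) hm (w2_bounds m k hm)) as (_ & _ & _ & D).
        destruct (Wb k) as [Hw Hw2]. fold (w m k) in D.
        assert (E : c * (1 - w2 m k) <= 4 * (1 - w m k) / (7 * INR m - 4)).
        { unfold c. unfold Rdiv. rewrite <- Hw2.
          assert (0 < / (7 * INR m - 4)) by (apply Rinv_0_lt_compat; lra).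
          assert (1 - w m k * w m k <= 2 * (1 - w m k)) by nra.
          replace (4 * (1 - w m k) * / (7 * INR m - 4)) with ((2 * / (7 * INR m - 4)) * (2 * (1 - w m k))) by ring.
          apply Rmult_le_compat_l; lra. }
        rewrite St. simpl.
        assert (0 <= 1 - w2 m k) by (pose proof (w2_bounds m k hm); lra).
        nra. }
    intros eps Heps.
    destruct (pow_lt_1_zero (1 - c) ltac:(rewrite Rabs_right; lra) eps Heps) as [N HN].
    exists N. intros n Hn. specialize (HN n Hn). rewrite Rabs_right in HN.
    2:{ apply Rle_ge, pow_le; lra. }
    unfold R_dist. destruct (Wb n) as [Hw Hw2].
    rewrite Rabs_left by lra. specialize (Dec n). nra.
  - intro k. cbv zeta. destruct (Wb k) as [Hw _]. split; [lra|].
    destruct (step m (w2 m k) hm (w2_bounds m k hm)) as (A & B & C & D).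
    rewrite St. fold (w m k) in D. split; lra.
Qed.
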